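(* Let $\Gamma$ be a triangulation of a connected closed surface $M$ and let $\tau$ be a $z$-orientation of $\Gamma$. For every vertex of type II, the number of edges of type II directed into this vertex equals the number of edges of type II directed out of it.
   Context: Let $M$ be a connected closed $2$-dimensional surface (not necessarily orientable). A triangulation of $M$ is a $2$-cell embedding of a connected simple finite graph in $M$ such that every face is a triangle; then every edge lies in exactly two distinct faces, and two distinct faces meet in an edge, in a vertex, or not at all. A zigzag in a triangulation $\Gamma$ is a sequence of edges $(e_i)_{i\in\mathbb N}$ such that for every $i$: $e_i$ and $e_{i+1}$ are distinct edges of a common face; the face containing $e_i,e_{i+1}$ is different from the face containing $e_{i+1},e_{i+2}$; and $e_i$, $e_{i+2}$ have no common vertex. Such a sequence is periodic and is regarded as a cyclic sequence $e_1,\dots,e_n$ ($n$ the minimal period); consecutive edges share a vertex, so a zigzag passes through each of its edges in a definite direction (from the vertex shared with the previous edge to the vertex shared with the next). The reversed sequence $Z^{-1}$ of a zigzag $Z$ is again a zigzag and $Z\neq Z^{-1}$. If $\Gamma$ has exactly $k$ zigzags up to reversal, a $z$-orientation of $\Gamma$ is a set $\tau$ of $k$ zigzags containing exactly one of $Z,Z^{-1}$ for every zigzag $Z$. For a $z$-orientation $\tau$, each edge $e$ either occurs twice in one zigzag of $\tau$ and in no other, or occurs once in each of exactly two distinct zigzags of $\tau$ and in no other. The edge $e$ is of type I if these two passages through $e$ are in opposite directions, and of type II if they are in the same direction; edges of type II are regarded as directed edges with this common direction. A vertex is of type I if all edges containing it are of type I, and of type II otherwise. *)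

(* Defs.v *)
From mathcomp Require Import all_boot.
Set Implicit Arguments. Unset Strict Implicit. Unset Printing Implicit Defensive.

(* ---------- Triangulations (combinatorial model) ----------
   Vertices: a finite type T.  Faces: a set F of 3-element vertex sets
   (faces are determined by their vertex sets). *)

Section Tri.
Variable T : finType.
Variable F : {set {set T}}.

Definition is_edge (e : {set T}) : bool :=
  (#|e| == 2) && [exists f in F, e \subset f].

Definition link_rel (v : T) : rel T := fun a b => [set v; a; b] \in F.

Definition adj : rel T := fun a b => is_edge [set a; b].

Definition is_triangulation : Prop :=
  [/\ F != set0 /\ (forall f, f \in F -> #|f| = 3),
      (forall v : T, exists2 f, f \in F & v \in f),
      (forall e, is_edge e -> #|[set f in F | e \subset f]| = 2),
      (* the link of every vertex is connected (hence a single cycle) *)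
      (forall v a b, adj v a -> adj v b -> connect (link_rel v) a b)
    &
      (forall a b : T, connect adj a b)].

Definition zat (s : seq {set T}) (i : nat) : {set T} := nth set0 s (i %% size s).

Definition is_zigzag (s : seq {set T}) : Prop :=
  [/\ 0 < size s /\ (forall i, is_edge (zat s i)),
      (forall i, zat s i != zat s i.+1 /\
                 exists2 f, f \in F & (zat s i \subset f) && (zat s i.+1 \subset f)),
      (forall i f g, f \in F -> g \in F ->
          zat s i \subset f -> zat s i.+1 \subset f ->
          zat s i.+1 \subset g -> zat s i.+2 \subset g -> f != g),
      (forall i, [disjoint zat s i & zat s i.+2])
    &
      (forall d, 0 < d < size s -> rot d s != s)].

Definition cyc_eq (s t : seq {set T}) : bool :=
  has (fun d => rot d s == t) (iota 0 (size s)).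

(* a z-orientation: a collection of zigzags containing exactly one of
   Z, Z^{-1} (up to the cyclic shift) for every zigzag Z *)
Definition z_orientation (tau : seq (seq {set T})) : Prop :=
  (forall Z, Z \in tau -> is_zigzag Z) /\
  (forall Z, is_zigzag Z ->
     count (fun Y => cyc_eq Z Y || cyc_eq (rev Z) Y) tau = 1).

(* the passages of the zigzags of tau through the edge e, each recorded as
   the pair (start vertex, end vertex) -- as singleton sets -- where the start
   vertex is the one shared with the previous edge and the end vertex the one
   shared with the next edge *)
Definition edge_passages (tau : seq (seq {set T})) (e : {set T})
  : seq ({set T} * {set T}) :=
  [seq (zat Z (i + size Z).-1 :&: zat Z i, zat Z i :&: zat Z i.+1)
     | Z <- tau, i <- [seq i <- iota 0 (size Z) | zat Z i == e]].

Definition typeI_edge (tau : seq (seq {set T})) (e : {set T}) : Prop :=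
  exists u w : T,
    perm_eq (edge_passages tau e) [:: ([set u], [set w]); ([set w], [set u])].

Definition typeII_dir (tau : seq (seq {set T})) (u w : T) : bool :=
  perm_eq (edge_passages tau [set u; w])
          [:: ([set u], [set w]); ([set u], [set w])].

Definition vertex_typeII (tau : seq (seq {set T})) (v : T) : Prop :=
  ~ (forall e, is_edge e -> v \in e -> typeI_edge tau e).

End Tri.

(* Main.v *)
Require Import Defs.
From mathcomp Require Import all_boot zify.
Set Implicit Arguments. Unset Strict Implicit. Unset Printing Implicit Defensive.

Section Tri1.
Variable T : finType.

Lemma disjE (A B : {set T}) t : [disjoint A & B] -> t \in A -> t \in B -> False.
Proof.
rewrite -setI_eq0 => /eqP h ha hb.
have : t \in A :&: B by rewrite inE ha hb.
by rewrite h inE.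
Qed.

Lemma disjI (A B : {set T}) : (forall t, t \in A -> t \in B -> False) -> [disjoint A & B].
Proof.
move=> h; rewrite -setI_eq0; apply/eqP/setP => t; rewrite !inE.
by apply/andP => -[ha hb]; apply: (h t).
Qed.

Variable F : {set {set T}}.
Hypothesis HT : is_triangulation F.

Lemma F3 (f : {set T}) : f \in F -> #|f| = 3.
Proof. by case: HT => [[_ H] _ _ _ _]; apply: H. Qed.

Lemma E2 (e : {set T}) : is_edge F e -> #|[set f in F | e \subset f]| = 2.
Proof. by case: HT => [_ _ H _ _]; apply: H. Qed.

Lemma edge2 (e : {set T}) : is_edge F e -> #|e| = 2.
Proof. by case/andP => /eqP. Qed.

Lemma edge_face (e f : {set T}) : f \in F -> e \subset f -> #|e| = 2 -> is_edge F e.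
Proof.
move=> hf he h2; rewrite /is_edge h2 eqxx /=; apply/existsP; exists f; by rewrite hf.
Qed.

Lemma edge_ex (e : {set T}) : is_edge F e -> exists2 f, f \in F & e \subset f.
Proof. by case/andP => _ /existsP [f /andP [hf he]]; exists f. Qed.

Lemma capE (x y : {set T}) : is_edge F x -> is_edge F y -> x != y -> #|x :&: y| <= 1.
Proof.
move=> hx hy hxy; rewrite leqNgt; apply/negP => h.
have e1 : x :&: y = x.
  apply/eqP; rewrite eqEcard subsetIl (edge2 hx); exact: h.
have sxy : x \subset y by apply/setIidPl.
move/negP: hxy; apply; rewrite eqEcard sxy (edge2 hx) (edge2 hy).
done.
Qed.

Lemma UF (x y f : {set T}) : is_edge F x -> is_edge F y -> x != y -> f \in F ->
  x \subset f -> y \subset f -> x :|: y = f.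
Proof.
move=> hx hy hxy hf sx sy; apply/eqP; rewrite eqEcard subUset sx sy /=.
have := cardsUI x y; have := capE hx hy hxy; rewrite (edge2 hx) (edge2 hy) (F3 hf).
lia.
Qed.

Lemma INT1 (x y : {set T}) : is_edge F x -> is_edge F y -> x != y -> x :|: y \in F ->
  #|x :&: y| = 1.
Proof.
move=> hx hy hxy hf.
have := cardsUI x y; have := capE hx hy hxy; rewrite (edge2 hx) (edge2 hy) (F3 hf).
lia.
Qed.

Lemma OTHER (y f : {set T}) : is_edge F y -> f \in F -> y \subset f ->
  exists g, [/\ g \in F, y \subset g, g != f &
     forall h, h \in F -> y \subset h -> h = f \/ h = g].
Proof.
move=> hy hf sf; have := E2 hy; move/eqP/cards2P => [a [b [hab hs]]].
have hin h : (h \in F) && (y \subset h) = (h \in [set a; b]).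
  by rewrite -hs inE.
have : f \in [set a; b] by rewrite -hin hf sf.
rewrite !inE => /orP [] /eqP ef.
- subst f; exists b; have := hin b; rewrite !inE eqxx orbT => /andP [hb1 hb2].
  split => //; first by rewrite eq_sym.
  move=> h hh sh; have := hin h; rewrite hh sh !inE => /esym/orP [] /eqP ->; auto.
- subst f; exists a; have := hin a; rewrite !inE eqxx /= => /andP [hb1 hb2].
  split => //.
  move=> h hh sh; have := hin h; rewrite hh sh !inE => /esym/orP [] /eqP ->; auto.
Qed.


Definition vst (x y : {set T}) : bool :=
  [&& is_edge F x, is_edge F y, x != y & x :|: y \in F].

Definition ztriple (x y z : {set T}) : Prop :=
  [/\ vst x y, vst y z, x :|: y != y :|: z & [disjoint x & z]].

Definition nextE (x y : {set T}) : {set T} :=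
  odflt set0 [pick g | (g \in F) && (y \subset g) && (g != x :|: y)] :\: x.

Lemma vst_sym x y : vst x y -> vst y x.
Proof. by case/and4P => a b c d; rewrite /vst a b eq_sym c setUC d. Qed.

Lemma ztriple_sym x y z : ztriple x y z -> ztriple z y x.
Proof.
case=> a b c d; split; try exact: vst_sym.
  by rewrite setUC eq_sym setUC.
by rewrite disjoint_sym.
Qed.

Lemma pick_other x y g : vst x y -> g \in F -> y \subset g -> g != x :|: y ->
  odflt set0 [pick g | (g \in F) && (y \subset g) && (g != x :|: y)] = g.
Proof.
case/and4P => hx hy hxy hf hg sg ng.
have [g0 [hg0 sg0 ng0 U]] := OTHER hy hf (subsetUr x y).
have eg : g = g0 by case: (U g hg sg) => // eg; rewrite eg eqxx in ng.
case: pickP => [g' /andP [/andP [hg' sg'] ng'] | hn] /=.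
  by rewrite eg; case: (U g' hg' sg') => // eg'; rewrite eg' eqxx in ng'.
by have := hn g; rewrite hg sg ng.
Qed.

Lemma capx_ge1 x y : vst x y -> 0 < #|x :&: y|.
Proof. by case/and4P => hx hy hxy hf; rewrite (INT1 hx hy hxy hf). Qed.

Lemma NEXT1 x y z : ztriple x y z -> z = nextE x y.
Proof.
move=> [hv1 hv2 hne hd].
have hv2' := hv2; case/and4P: hv2' => hy hz hyz hg.
rewrite /nextE (pick_other hv1 hg (subsetUl y z)); last by rewrite eq_sym.
apply/eqP; rewrite eqEcard subsetD subsetUr disjoint_sym hd /=.
rewrite cardsD (edge2 hz) (F3 hg).
have : #|x :&: y| <= #|(y :|: z) :&: x|.
  apply: subset_leq_card; apply/subsetP => t; rewrite !inE => /andP [a b].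
  by rewrite a b.
have := capx_ge1 hv1; lia.
Qed.

Lemma NEXT2 x y : vst x y -> ztriple x y (nextE x y).
Proof.
move=> hv; have hv' := hv; case/and4P: hv' => hx hy hxy hf.
have [g [hg sg ng U]] := OTHER hy hf (subsetUr x y).
rewrite /nextE (pick_other hv hg sg ng).
set z := g :\: x.
have c1 : 0 < #|g :&: x|.
  have : #|x :&: y| <= #|g :&: x|.
    apply: subset_leq_card; apply/subsetP => t; rewrite !inE => /andP [a b].
    by rewrite a (subsetP sg).
  have := capx_ge1 hv; lia.
have c2 : #|g :&: x| <= 1.
  rewrite leqNgt; apply/negP => h.
  have e1 : g :&: x = x.
    apply/eqP; rewrite eqEcard subsetIr (edge2 hx); exact: h.
  have sx : x \subset g by rewrite -e1 subsetIl.
  move/negP: ng; apply; rewrite eq_sym eqEcard subUset sx sg (F3 hf) (F3 hg).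
  done.
have cz : #|z| = 2 by rewrite /z cardsD (F3 hg); lia.
have ez : is_edge F z by apply: (edge_face hg) => //; rewrite /z subsetDl.
have dxz : [disjoint x & z] by apply: disjI => t h1; rewrite /z inE h1.
have nyz : y != z.
  apply/negP => /eqP eyz.
  have /card_gt0P [t] := capx_ge1 hv; rewrite inE => /andP [t1 t2].
  by apply: (disjE dxz t1); rewrite -eyz.
have eU : y :|: z = g by apply: UF => //; rewrite /z subsetDl.
split => //; first by rewrite /vst hy ez nyz eU hg.
  by rewrite eU eq_sym.
Qed.


Implicit Types s t Z W : seq {set T}.

Definition zz (s : seq {set T}) := forall i, ztriple (zat s i) (zat s i.+1) (zat s i.+2).
Definition minper (s : seq {set T}) := forall d, 0 < d < size s -> rot d s != s.

Lemma ZZ1 s : is_zigzag F s -> zz s.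
Proof.
case=> [[hs he] hadj hfac hdis hmin] i.
have vs j : vst (zat s j) (zat s j.+1).
  case: (hadj j) => hne [f hf /andP [s1 s2]].
  by rewrite /vst he he hne (UF (he j) (he j.+1) hne hf s1 s2).
split; [exact: vs | exact: vs | | exact: hdis].
apply/negP => /eqP heq.
have hf1 : zat s i :|: zat s i.+1 \in F by case/and4P: (vs i).
have hf2 : zat s i.+1 :|: zat s i.+2 \in F by case/and4P: (vs i.+1).
have := hfac i _ _ hf1 hf2 (subsetUl _ _) (subsetUr _ _) (subsetUl _ _) (subsetUr _ _).
by rewrite heq eqxx.
Qed.

Lemma ZZ2 s : 0 < size s -> zz s -> minper s -> is_zigzag F s.
Proof.
move=> hs hz hm; split => //.
- by split => // i; case: (hz i) => /and4P [].
- move=> i; case: (hz i) => /and4P [_ _ hne hf] _ _ _; split => //.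
  by exists (zat s i :|: zat s i.+1) => //; rewrite subsetUl subsetUr.
- move=> i f g hf hg s1 s2 s3 s4; case: (hz i) => v1 v2 hne _.
  case/and4P: v1 => h1 h2 h3 _; case/and4P: v2 => h4 h5 h6 _.
  by rewrite -(UF h1 h2 h3 hf s1 s2) -(UF h4 h5 h6 hg s3 s4).
- by move=> i; case: (hz i).
Qed.

Lemma ZMOD s i : zat s (i %% size s) = zat s i.
Proof. by rewrite /zat modn_mod. Qed.

Lemma ZADD s i k : zat s (i + k * size s) = zat s i.
Proof. by rewrite /zat addnC modnMDl. Qed.

Lemma ZEQ s i j : i %% size s = j %% size s -> zat s i = zat s j.
Proof. by rewrite /zat => ->. Qed.

Lemma ZNTH s i : i < size s -> zat s i = nth set0 s i.
Proof. by move=> h; rewrite /zat modn_small. Qed.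

Lemma ZROT s d i : d <= size s -> zat (rot d s) i = zat s (i + d).
Proof.
move=> hd; rewrite /zat size_rot; set n := size s.
case: (posnP n) => hn.
  move: hd; rewrite /n in hn *; move/size0nil: hn => ->; rewrite leqn0 => /eqP ->.
  by rewrite rot0 /= !nth_nil.
have hj : i %% n < n by apply: ltn_pmod.
rewrite -modnDml; set j := i %% n.
rewrite /rot nth_cat size_drop -/n.
case: ltnP => hjd.
  rewrite nth_drop modn_small; last lia.
  by rewrite addnC.
rewrite nth_take; last lia.
have -> : j + d = (j - (n - d)) + n by lia.
rewrite modnDr modn_small //; lia.
Qed.

Lemma ZREV s i : 0 < size s -> zat (rev s) i = zat s (i.+1 * (size s).-1).
Proof.
move=> hn; rewrite /zat size_rev; set n := size s.
rewrite nth_rev; last exact: ltn_pmod.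
have hr := ltn_pmod i hn; have hq := divn_eq i n.
set r := i %% n in hr hq *; set q := i %/ n in hq.
have -> : i.+1 * n.-1 = (q * n.-1 + r) * n + (n - r.+1) by nia.
rewrite modnMDl modn_small //; lia.
Qed.

Lemma size2 s : is_zigzag F s -> 1 < size s.
Proof.
case=> [[hs _] hadj _ _ _]; rewrite ltn_neqAle hs andbT.
apply/negP => /eqP h1; case: (hadj 0) => /negP h _; apply: h.
by rewrite /zat -h1 !modn1.
Qed.

Lemma DET Z W a b : zz Z -> zz W -> zat Z a = zat W b -> zat Z a.+1 = zat W b.+1 ->
  forall k, zat Z (a + k) = zat W (b + k).
Proof.
move=> hZ hW h0 h1.
suff H : forall k, zat Z (a + k) = zat W (b + k) /\ zat Z (a + k).+1 = zat W (b + k).+1.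
  by move=> k; case: (H k).
elim=> [|k [IH1 IH2]]; first by rewrite !addn0.
rewrite !addnS; split => //.
by rewrite (NEXT1 (hZ _)) (NEXT1 (hW _)) IH1 IH2.
Qed.

Lemma PER s m : minper s -> 0 < m -> (forall j, zat s (j + m) = zat s j) -> size s <= m.
Proof.
move=> hmin hm H; rewrite leqNgt; apply/negP => hlt.
have := hmin m; rewrite hm hlt => /(_ isT) /negP; apply.
apply/eqP; apply: (@eq_from_nth _ set0); rewrite size_rot // => j hj.
rewrite -ZNTH ?size_rot // -ZNTH // ZROT ?H //; exact: ltnW.
Qed.

Lemma GENPER s a m : 0 < size s -> (forall k, zat s (a + k + m) = zat s (a + k)) ->
  forall x, zat s (x + m) = zat s x.
Proof.
move=> hn H x.
rewrite -[in LHS](ZADD s (x + m) a) -[in RHS](ZADD s x a).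
have -> : x + m + a * size s = a + (x + a * (size s).-1) + m by nia.
have -> : x + a * size s = a + (x + a * (size s).-1) by nia.
exact: H.
Qed.

Lemma SHIFT_LE Z W a b : minper W -> 0 < size Z -> 0 < size W ->
  (forall k, zat Z (a + k) = zat W (b + k)) -> size W <= size Z.
Proof.
move=> hmW hZ hW H; apply: PER => //.
apply: (GENPER (a := b)) => // k.
rewrite -addnA -H addnA.
have := ZADD Z (a + k) 1; rewrite mul1n => ->.
exact: H.
Qed.

Lemma SHIFT Z W a b : minper Z -> minper W -> 0 < size Z -> 0 < size W ->
  (forall k, zat Z (a + k) = zat W (b + k)) -> cyc_eq Z W.
Proof.
move=> hmZ hmW hZ hW H.
have en : size Z = size W.
  have h1 := SHIFT_LE hmW hZ hW H.
  have h2 : size Z <= size W.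
    by apply: (SHIFT_LE (a := b) (b := a) hmZ hW hZ) => k; rewrite H.
  by apply/eqP; rewrite eqn_leq h1 h2.
set n := size Z in en hZ *.
set d := (a + b * n.-1) %% n.
have hd : d < n by apply: ltn_pmod.
apply/hasP; exists d; first by rewrite mem_iota add0n hd.
apply/eqP; apply: (@eq_from_nth _ set0); rewrite size_rot // => j hj.
rewrite -ZNTH ?size_rot // -ZNTH -?en // ZROT; last exact: ltnW.
rewrite -(ZADD W j b) -en.
have -> : j + b * n = b + (j + b * n.-1) by nia.
rewrite -H; apply: ZEQ; rewrite modnDmr; congr (_ %% _); lia.
Qed.

Lemma CYC s t : cyc_eq s t -> exists2 d, d < size s & rot d s = t.
Proof. by case/hasP => d; rewrite mem_iota add0n => /andP [_ h] /eqP; exists d. Qed.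

Lemma cyc_refl s : 0 < size s -> cyc_eq s s.
Proof. by move=> h; apply/hasP; exists 0; rewrite ?mem_iota ?rot0 //. Qed.


Lemma REVZZ Z : is_zigzag F Z -> is_zigzag F (rev Z).
Proof.
move=> hZ; have hn := size2 hZ; have hz := ZZ1 hZ.
case: hZ => [[hs _] _ _ _ hmin].
apply: ZZ2; rewrite ?size_rev //.
- move=> i; rewrite !ZREV //; set n := size Z; apply: ztriple_sym.
  have e1 : zat Z ((i.+3 * n.-1).+1) = zat Z (i.+2 * n.-1).
    rewrite -(ZADD Z (i.+2 * n.-1) 1); congr zat; nia.
  have e2 : zat Z ((i.+3 * n.-1).+2) = zat Z (i.+1 * n.-1).
    rewrite -(ZADD Z (i.+1 * n.-1) 2); congr zat; nia.
  by have := hz (i.+3 * n.-1); rewrite e1 e2.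
- move=> d; rewrite size_rev => hd; apply/negP => /eqP h.
  have h2 : rotr d Z = Z by apply: (can_inj (@revK _)); rewrite rev_rotr h.
  have h3 : Z = rot d Z by rewrite -{2}h2 rotrK.
  by move/negP: (hmin d hd); apply; rewrite -h3.
Qed.

Lemma edge_n0 (x : {set T}) : is_edge F x -> exists a : T, a \in x.
Proof. by move=> h; apply/card_gt0P; rewrite (edge2 h). Qed.

Lemma REFL Z : is_zigzag F Z -> ~~ cyc_eq (rev Z) Z.
Proof.
move=> hZ; apply/negP => /CYC [d hd hrot]; rewrite size_rev in hd.
have hn := size2 hZ; have hz := ZZ1 hZ.
have [q hq] : exists q, size Z = q.+2 by exists (size Z).-2; lia.
have Key k : zat Z k = zat Z ((k + d).+1 * q.+1).
  by rewrite -{1}hrot ZROT ?size_rev ?ZREV ?hq //; lia.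
have hd2 := odd_double_half d; set h := d./2 in hd2.
case ho : (odd d) hd2 => hd2.
- set k := (h + 2) * q.+1.
  have ek : zat Z k = zat Z k.+2.
    rewrite Key -(ZADD Z k.+2 ((h + 2) * q + h)) hq; congr zat.
    rewrite /k; nia.
  case: (hz k) => /and4P [hx _ _ _] _ _ hd'.
  have [a0 ha0] := edge_n0 hx.
  by apply: (disjE hd' ha0); rewrite -ek.
- set k := (h + 1) * q.+1.
  have ek : zat Z k = zat Z k.+1.
    rewrite Key -(ZADD Z k.+1 ((h + 1) * q + h)) hq; congr zat.
    rewrite /k; nia.
  case: (hz k) => /and4P [_ _ hne _] _ _ _.
  by rewrite ek eqxx in hne.
Qed.

Definition fs (p : {set T} * {set T}) : {set T} * {set T} :=
  if vst p.1 p.2 then (p.2, nextE p.1 p.2) else p.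

Lemma fs_valid p : vst p.1 p.2 -> vst (fs p).1 (fs p).2.
Proof. by move=> h; rewrite /fs h /=; case: (NEXT2 h). Qed.

Lemma fs_inj : injective fs.
Proof.
move=> [x1 y1] [x2 y2]; rewrite /fs /=.
case: ifP => h1; case: ifP => h2.
- case=> ey ez; subst y2.
  have t1 := ztriple_sym (NEXT2 h1); have t2 := ztriple_sym (NEXT2 h2).
  by rewrite (NEXT1 t1) (NEXT1 t2) ez.
- move=> e; have := @fs_valid (x1, y1) h1; by rewrite /fs /= h1 e /= h2.
- move=> e; have := @fs_valid (x2, y2) h2; by rewrite /fs /= h2 -e /= h1.
- done.
Qed.

Lemma iter_valid p k : vst p.1 p.2 -> vst (iter k fs p).1 (iter k fs p).2.
Proof. by move=> h; elim: k => //= k IH; apply: fs_valid. Qed.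

Lemma iter_mod p k : iter k fs p = iter (k %% order fs p) fs p.
Proof.
set N := order fs p.
have H m : iter (m * N) fs p = p.
  elim: m => // m IH; by rewrite mulSn iterD IH iter_order //; apply: fs_inj.
by rewrite {1}(divn_eq k N) addnC iterD H.
Qed.

Definition Yc p := map fst (orbit fs p).

Lemma zatY p k : zat (Yc p) k = (iter k fs p).1.
Proof.
have hN := order_gt0 fs p.
rewrite /zat /Yc size_map size_orbit (nth_map p); last by rewrite size_orbit ltn_pmod.
by rewrite /orbit nth_traject ?ltn_pmod // -iter_mod.
Qed.

Lemma zatY1 p k : vst p.1 p.2 -> zat (Yc p) k.+1 = (iter k fs p).2.
Proof. by move=> h; rewrite zatY iterS /fs iter_valid. Qed.

Lemma Yc_zz p : vst p.1 p.2 -> is_zigzag F (Yc p).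
Proof.
move=> hp; apply: ZZ2.
- by rewrite size_map size_orbit order_gt0.
- move=> i; rewrite zatY !zatY1 // iterS /fs iter_valid //=.
  exact: NEXT2 (iter_valid _ hp).
- move=> d; rewrite size_map size_orbit => /andP [d0 dN]; apply/negP => /eqP h.
  have e1 : iter d fs p = p.
    have a1 : zat (Yc p) (0 + d) = zat (Yc p) 0.
      by rewrite -ZROT ?h // size_map size_orbit ltnW.
    have a2 : zat (Yc p) (1 + d) = zat (Yc p) 1.
      by rewrite -ZROT ?h // size_map size_orbit ltnW.
    rewrite add0n !zatY /= in a1; rewrite add1n !zatY1 // /= in a2.
    move: a1 a2; case: (iter d fs p) => u w /= -> ->.
    by case: (p) => ? ?.
  have u := orbit_uniq fs p.
  have hdN : d < size (orbit fs p) by rewrite size_orbit.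
  have h0N : 0 < size (orbit fs p) by rewrite size_orbit order_gt0.
  have := nth_uniq p hdN h0N u.
  rewrite /orbit !nth_traject ?order_gt0 // e1 /= eqxx => /esym /eqP.
  by move=> e; rewrite e in d0.
Qed.

Lemma Yc0 p : zat (Yc p) 0 = p.1.
Proof. by rewrite zatY. Qed.
Lemma Yc1 p : vst p.1 p.2 -> zat (Yc p) 1 = p.2.
Proof. by move=> h; rewrite zatY1. Qed.
Lemma Yc2 p : vst p.1 p.2 -> zat (Yc p) 2 = nextE p.1 p.2.
Proof. by move=> h; rewrite zatY1 //= /fs h. Qed.


Lemma count2 (X : eqType) (a : pred X) (s : seq X) x y :
  x \in s -> y \in s -> x != y -> a x -> a y -> 1 < count a s.
Proof.
elim: s => // z s IH; rewrite !inE => hx hy hne ax ay /=.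
case: (eqVneq x z) hx => [exz _ | hxz /= hx].
  subst z; rewrite ax; rewrite eq_sym (negbTE hne) /= in hy.
  have : 0 < count a s by rewrite -has_count; apply/hasP; exists y.
  lia.
case: (eqVneq y z) hy => [eyz _ | hyz /= hy].
  subst z; rewrite ay.
  have : 0 < count a s by rewrite -has_count; apply/hasP; exists x.
  lia.
have := IH hx hy hne ax ay; lia.
Qed.

Lemma PRVMOD s X : 0 < size s -> zat s ((X %% size s + size s).-1) = zat s (X + (size s).-1).
Proof.
move=> hn; apply: ZEQ.
have -> : (X %% size s + size s).-1 = X %% size s + (size s).-1 by lia.
by rewrite modnDml.
Qed.

Lemma PERCONTRA Z a b : is_zigzag F Z -> a < b -> b < a + size Z ->
  (forall k, zat Z (a + k) = zat Z (b + k)) -> False.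
Proof.
move=> hZ hab hb H.
have hs : 0 < size Z by have := size2 hZ; lia.
have hmin : minper Z by case: hZ.
have G := GENPER (a := a) (m := b - a) hs.
have : size Z <= b - a.
  apply: PER => //; first lia.
  apply: G => k; rewrite H; congr zat; lia.
lia.
Qed.

Lemma size_q (s : seq {set T}) : 1 < size s -> exists q, size s = q.+2.
Proof. by case: (size s) => [|[|q]] // _; exists q. Qed.

Lemma zsz Z k : zat Z (k + size Z) = zat Z k.
Proof. by have := ZADD Z k 1; rewrite mul1n. Qed.

Section Tau.
Variable tau : seq (seq {set T}).
Hypothesis HZ : z_orientation F tau.

Definition cls Z := fun Y => cyc_eq Z Y || cyc_eq (rev Z) Y.

Lemma tauZZ Z : Z \in tau -> is_zigzag F Z.
Proof. by case: HZ => H _; apply: H. Qed.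

Lemma cls1 Z : is_zigzag F Z -> count (cls Z) tau = 1.
Proof. by case: HZ => _ H; apply: H. Qed.

Lemma zpos Z : is_zigzag F Z -> 0 < size Z.
Proof. by move/size2; lia. Qed.

Lemma NODUP Z W : Z \in tau -> W \in tau -> cls Z W -> W = Z.
Proof.
move=> hZ hW hc; case: (eqVneq W Z) => // hne.
have hcz : cls Z Z by rewrite /cls cyc_refl // (zpos (tauZZ hZ)).
have := count2 hZ hW (contra_neq (@esym _ _ _) hne) hcz hc.
by rewrite (cls1 (tauZZ hZ)).
Qed.

Lemma tau_uniq : uniq tau.
Proof.
apply: count_mem_uniq => x; case hx : (x \in tau).
  have h1 : count_mem x tau <= 1.
    rewrite -(cls1 (tauZZ hx)); apply: sub_count => y /eqP ->.
    by rewrite /cls cyc_refl // (zpos (tauZZ hx)).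
  have h2 : 0 < count_mem x tau.
    rewrite -has_count; apply/hasP; exists x; rewrite ?hx //=.
  by apply/eqP; rewrite eqn_leq h1 h2.
by apply/count_memPn; rewrite hx.
Qed.


Section Edge.
Variable e : {set T}.
Hypothesis He : is_edge F e.

Definition occ : seq (seq {set T} * nat) :=
  [seq (Z, i) | Z <- tau, i <- [seq i <- iota 0 (size Z) | zat Z i == e]].

Definition prv (p : seq {set T} * nat) := zat p.1 (p.2 + size p.1).-1.

Lemma mem_occ Z i : (Z, i) \in occ -> [/\ Z \in tau, i < size Z & zat Z i = e].
Proof.
case/allpairsPdep => [W [j [hW hj [-> ->]]]].
by move: hj; rewrite mem_filter mem_iota add0n => /andP [/eqP -> /andP [_ ->]].
Qed.

Lemma occ_in Z i : Z \in tau -> i < size Z -> zat Z i = e -> (Z, i) \in occ.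
Proof.
move=> hZ hi he; apply/flatten_mapP; exists Z => //; apply/mapP; exists i => //.
by rewrite mem_filter mem_iota add0n hi he eqxx.
Qed.

Lemma occ_uniq : uniq occ.
Proof.
apply: (allpairs_uniq_dep (T := fun _ => nat)).
- exact: tau_uniq.
- by move=> Z _; apply: filter_uniq; apply: iota_uniq.
- by move=> [Z1 i1] [Z2 i2] _ _ /= [-> ->].
Qed.

Lemma occ_state Z i : (Z, i) \in occ ->
  let a := (i + size Z).-1 in
  [/\ zat Z a = prv (Z, i), zat Z a.+1 = e & zat Z a.+2 = nextE (prv (Z, i)) e].
Proof.
move/mem_occ => [hZ hi he] a.
have hz := ZZ1 (tauZZ hZ); have hn := zpos (tauZZ hZ).
have ea : a.+1 = i + size Z by rewrite /a; lia.
have e1 : zat Z a.+1 = e by rewrite ea zsz.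
split => //; rewrite (NEXT1 (hz a)) e1 //.
Qed.

Lemma prv_inj2 (Z W : seq {set T}) (i j : nat) : (Z, i) \in occ -> (W, j) \in occ ->
  prv (Z, i) = prv (W, j) -> (Z, i) = (W, j).
Proof.
move=> ho1 ho2 hp.
have [hZ hi _] := mem_occ ho1; have [hW hj _] := mem_occ ho2.
have [a1 a2 _] := occ_state ho1; have [b1 b2 _] := occ_state ho2.
have zZ := tauZZ hZ; have zW := tauZZ hW.
set a := (i + size Z).-1 in a1 a2; set b := (j + size W).-1 in b1 b2.
have D := DET (ZZ1 zZ) (ZZ1 zW) (etrans a1 (etrans hp (esym b1))) (etrans a2 (esym b2)).
have hc : cyc_eq Z W.
  by apply: (SHIFT (a := a) (b := b)) => //; [case: zZ | case: zW | apply: zpos | apply: zpos].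
have eWZ := NODUP hZ hW (introT orP (or_introl hc)).
subst W; have hn := zpos zZ.
case: (ltngtP i j) => hij.
- exfalso; apply: (PERCONTRA zZ (a := a) (b := b)); rewrite /a /b; try lia.
  by move=> k; apply: D.
- exfalso; apply: (PERCONTRA zZ (a := b) (b := a)); rewrite /a /b; try lia.
  by move=> k; rewrite D.
- by rewrite hij.
Qed.

Lemma prv_inj : {in occ &, injective prv}.
Proof. by move=> [Z i] [W j]; apply: prv_inj2. Qed.


Definition InE := [set x | vst x e].
Definition sig x := nextE x e.
Definition Iset := [set x | x \in map prv occ].

Lemma prv_vst (Z : seq {set T}) (i : nat) : (Z, i) \in occ -> vst (prv (Z, i)) e.
Proof.
move=> ho; have [hZ _ _] := mem_occ ho; have [a1 a2 _] := occ_state ho.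
by case: (ZZ1 (tauZZ hZ) (i + size Z).-1); rewrite a1 a2.
Qed.

Lemma sig_vst x : vst x e -> vst (sig x) e /\ sig (sig x) = x.
Proof.
move=> h; have t := ztriple_sym (NEXT2 h); case: (t) => v1 _ _ _.
by split => //; rewrite /sig -(NEXT1 t).
Qed.

Lemma Iset_in x : x \in Iset -> vst x e.
Proof. by rewrite inE => /mapP [[Z i] ho ->]; apply: prv_vst. Qed.

Lemma sig_not2 (Z W : seq {set T}) (i j : nat) : (Z, i) \in occ -> (W, j) \in occ ->
  sig (prv (Z, i)) = prv (W, j) -> False.
Proof.
move=> ho1 ho2 hpw.
have [hZ hi _] := mem_occ ho1; have [a1 a2 a3] := occ_state ho1.
have [hW hj _] := mem_occ ho2; have [b1 b2 _] := occ_state ho2.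
set a := (i + size Z).-1 in a1 a2 a3; set b := (j + size W).-1 in b1 b2.
have zZ := tauZZ hZ; have zW := tauZZ hW; have zR := REVZZ zZ.
have [q hq] := size_q (size2 zZ).
have r1 : zat (rev Z) (a.+3 * q.+1) = zat Z a.+2.
  rewrite ZREV ?(zpos zZ) // hq /= -(ZADD Z a.+2 ((a + 3) * q + 1)) hq; congr zat; lia.
have r2 : zat (rev Z) (a.+3 * q.+1).+1 = zat Z a.+1.
  rewrite ZREV ?(zpos zZ) // hq /= -(ZADD Z a.+1 ((a + 3) * q + 2)) hq; congr zat; lia.
have D := DET (ZZ1 zR) (ZZ1 zW) (etrans r1 (etrans a3 (etrans hpw (esym b1))))
                                (etrans r2 (etrans a2 (esym b2))).
have hc : cyc_eq (rev Z) W.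
  apply: (SHIFT (a := a.+3 * q.+1) (b := b)) => //; try apply: zpos => //.
  by case: zR. by case: zW.
have eWZ := NODUP hZ hW (introT orP (or_intror hc)).
subst W; move/negP: (REFL zZ); apply; exact: hc.
Qed.

Lemma sig_not x : x \in Iset -> sig x \in Iset -> False.
Proof.
rewrite !inE => /mapP [[Z i] ho1 ->] /mapP [[W j] ho2 hpw].
exact: sig_not2 ho1 ho2 hpw.
Qed.

Lemma cover x : vst x e -> x \in Iset \/ sig x \in Iset.
Proof.
move=> hx; pose p0 := (x, e).
have hp : vst p0.1 p0.2 by [].
have zY := Yc_zz hp; set Y := Yc p0 in zY.
have : has (cls Y) tau by rewrite has_count (cls1 zY).
case/hasP => Y' hY' /orP [] hc.
- have [d hd hrot] := CYC hc.
  have [q hq] := size_q (size2 zY).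
  have sY' : size Y' = q.+2 by rewrite -hrot size_rot.
  have zr k : zat Y' k = zat Y (k + d) by rewrite -hrot ZROT // ltnW.
  left; rewrite inE; apply/mapP; exists (Y', (1 + d * q.+1) %% size Y').
    apply: occ_in => //; first by rewrite ltn_pmod // sY'.
    rewrite ZMOD zr.
    have -> : 1 + d * q.+1 + d = 1 + d * size Y by rewrite hq; lia.
    by rewrite ZADD /Y Yc1.
  rewrite /prv /= PRVMOD ?sY' // zr.
  have -> : 1 + d * q.+1 + q.+1 + d = 0 + (d + 1) * size Y by rewrite hq; lia.
  by rewrite ZADD /Y Yc0.
- have [d hd hrot] := CYC hc; rewrite size_rev in hd.
  have [q hq] := size_q (size2 zY).
  have sY' : size Y' = q.+2 by rewrite -hrot size_rot size_rev.
  have zr k : zat Y' k = zat Y ((k + d).+1 * q.+1).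
    have hY0 := zpos zY; rewrite -hrot ZROT; last by rewrite size_rev ltnW.
    by rewrite ZREV // hq.
  right; rewrite inE; apply/mapP; exists (Y', ((d + 2) * q.+1) %% size Y').
    apply: occ_in => //; first by rewrite ltn_pmod // sY'.
    rewrite ZMOD zr.
    have -> : ((d + 2) * q.+1 + d).+1 * q.+1 = 1 + ((d + 2) * q + d + 1) * size Y.
      by rewrite hq; lia.
    by rewrite ZADD /Y Yc1.
  rewrite /prv /= PRVMOD ?sY' // zr.
  have -> : ((d + 2) * q.+1 + q.+1 + d).+1 * q.+1 = 2 + ((d + 3) * q + d + 1) * size Y.
    by rewrite hq; lia.
  by rewrite ZADD /Y Yc2.
Qed.


Lemma InE_card : #|InE| = 4.
Proof.
have [f0 hf0 sf0] := edge_ex He.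
have [g0 [hg0 sg0 ng0 U]] := OTHER He hf0 sf0.
pose D (h : {set T}) := [set x : {set T} | (x \subset h) && (#|x| == 2)] :\ e.
have cD h : h \in F -> e \subset h -> #|D h| = 2.
  move=> hh sh; have := cardsD1 e [set x : {set T} | (x \subset h) && (#|x| == 2)].
  rewrite cards_draws (F3 hh) inE sh (edge2 He) eqxx /=.
  rewrite (_ : 'C(3, 2) = 3) // => h3; rewrite /D; move: h3; rewrite add1n => -[].
  done.
have eq : InE = D f0 :|: D g0.
  apply/setP => x; rewrite /D !inE; apply/idP/idP.
  - case/and4P => hx _ hxe hxf; rewrite (edge2 hx) eqxx hxe /= !andbT.
    by case: (U _ hxf (subsetUr x e)) => <-; rewrite subsetUl ?orbT.
  - case/orP => /andP [hxe /andP [sx /eqP cx]].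
      have hx := edge_face hf0 sx cx.
      by rewrite /vst hx He hxe (UF hx He hxe hf0 sx sf0) hf0.
    have hx := edge_face hg0 sx cx.
    by rewrite /vst hx He hxe (UF hx He hxe hg0 sx sg0) hg0.
have disj : D f0 :&: D g0 = set0.
  apply/setP => x; rewrite /D !inE; apply/negP.
  move=> /andP [/andP [hxe /andP [s1 /eqP c1]] /andP [_ /andP [s2 _]]].
  have hx := edge_face hf0 s1 c1.
  have e1 := UF hx He hxe hf0 s1 sf0; have e2 := UF hx He hxe hg0 s2 sg0.
  by rewrite -e1 -e2 eqxx in ng0.
rewrite eq; have := cardsUI (D f0) (D g0); rewrite disj cards0 cD // cD //.
by rewrite addn0.
Qed.

Lemma Iset_card : #|Iset| = 2.
Proof.
set J := [set sig x | x in Iset].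
have injS : {in Iset &, injective sig}.
  move=> x y hx hy exy.
  by rewrite -(proj2 (sig_vst (Iset_in hx))) exy (proj2 (sig_vst (Iset_in hy))).
have cJ : #|J| = #|Iset| := card_in_imset injS.
have U : InE = Iset :|: J.
  apply/setP => x; rewrite in_setU [in LHS]inE; apply/idP/orP.
  - move=> hx; case: (cover hx) => h; [by left | right].
    by apply/imsetP; exists (sig x) => //; rewrite (proj2 (sig_vst hx)).
  - case => [/Iset_in // | /imsetP [y hy ->]].
    exact: (proj1 (sig_vst (Iset_in hy))).
have D : Iset :&: J = set0.
  apply/setP => y; rewrite inE in_set0; apply/negP => /andP [hy /imsetP [x hx ey]].
  by subst y; apply: (sig_not hx hy).
have := cardsUI Iset J; rewrite -U D cards0 InE_card cJ addn0.
move=> h; have : 2 * #|Iset| = 2 * 2 by rewrite mul2n -addnn -h.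
by move/eqP; rewrite eqn_pmul2l // => /eqP.
Qed.

Definition pass (p : seq {set T} * nat) :=
  (zat p.1 (p.2 + size p.1).-1 :&: zat p.1 p.2, zat p.1 p.2 :&: zat p.1 p.2.+1).

Lemma EP : edge_passages tau e = map pass occ.
Proof.
rewrite /edge_passages /occ map_flatten -map_comp.
by congr flatten; apply: eq_map => Z /=; rewrite -map_comp.
Qed.

Lemma EP_size : size (edge_passages tau e) = 2.
Proof.
rewrite EP size_map -(size_map prv) -Iset_card /Iset cardsE.
by apply/esym/card_uniqP; rewrite map_inj_in_uniq; [exact: occ_uniq | exact: prv_inj].
Qed.

Lemma pass_form (Z : seq {set T}) (i : nat) : (Z, i) \in occ ->
  exists a b, [/\ a != b, a \in e, b \in e & pass (Z, i) = ([set a], [set b])].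
Proof.
move=> ho; have [hZ hi ei] := mem_occ ho; have [a1 a2 a3] := occ_state ho.
set a0 := (i + size Z).-1 in a1 a2 a3.
have hn := zpos (tauZZ hZ).
case: (ZZ1 (tauZZ hZ) a0) => v1 v2 _ hd.
have e3 : zat Z a0.+2 = zat Z i.+1.
  by rewrite (_ : a0.+2 = i.+1 + size Z) ?zsz // /a0; lia.
rewrite a2 e3 in v2; rewrite e3 in hd; rewrite a2 in v1.
case/and4P: (v1) => h1 h2 h3 h4; case/and4P: (v2) => h5 h6 h7 h8.
have /cards1P [a ha] : #|zat Z a0 :&: e| == 1 by rewrite (INT1 h1 h2 h3 h4).
have /cards1P [b hb] : #|e :&: zat Z i.+1| == 1 by rewrite (INT1 h5 h6 h7 h8).
have ia : a \in zat Z a0 :&: e by rewrite ha set11.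
have ib : b \in e :&: zat Z i.+1 by rewrite hb set11.
rewrite !inE in ia ib; case/andP: ia => ia1 ia2; case/andP: ib => ib1 ib2.
exists a, b; split => //.
  by apply/negP => /eqP eab; subst b; apply: (disjE hd ia1 ib2).
by rewrite /pass /= -/a0 ei ha hb.
Qed.

Lemma EP_form p : p \in edge_passages tau e ->
  exists a b, [/\ a != b, a \in e, b \in e & p = ([set a], [set b])].
Proof. by rewrite EP => /mapP [[Z i] ho ->]; apply: pass_form. Qed.
End Edge.


Definition Pall := [seq pass (Z, i) | Z <- tau, i <- iota 0 (size Z)].

Lemma count_rot (g : pred nat) n : g n = g 0 ->
  count (fun i => g i.+1) (iota 0 n) = count g (iota 0 n).
Proof.
move=> hg; have -> : count (fun i => g i.+1) (iota 0 n) = count g (iota 1 n).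
  by rewrite (iotaDl 1 0) count_map.
case: n hg => // n hg.
have -> : iota 1 n.+1 = iota 1 n ++ [:: n.+1] by rewrite -[n.+1]addn1 iotaD /= (addnC 1 n).
by rewrite count_cat /= hg addn0 addnC.
Qed.

Lemma G1 v : count (fun p => p.2 == [set v]) Pall = count (fun p => p.1 == [set v]) Pall.
Proof.
rewrite /Pall !count_flatten -!map_comp; congr sumn; apply: eq_map => Z /=.
rewrite !count_map.
transitivity (count (fun i => (pass (Z, i.+1)).1 == [set v]) (iota 0 (size Z))).
  apply: eq_count => i /=.
  by rewrite zsz.
rewrite (count_rot (g := fun i => (pass (Z, i)).1 == [set v])); first by apply: eq_count.
rewrite /=.
case: (posnP (size Z)) => hn; first by rewrite hn.
rewrite add0n (_ : (size Z + size Z).-1 = (size Z).-1 + size Z); last by lia.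
by rewrite zsz -{2}(add0n (size Z)) zsz.
Qed.

Lemma pass_sing (Z : seq {set T}) i : Z \in tau ->
  (exists a, (pass (Z, i)).1 = [set a]) /\ (exists b, (pass (Z, i)).2 = [set b]).
Proof.
move=> hZ; have zZ := tauZZ hZ; have hn := zpos zZ.
set a0 := (i + size Z).-1.
case: (ZZ1 zZ a0) => v1 v2 _ _.
have e2 : zat Z a0.+1 = zat Z i by rewrite (_ : a0.+1 = i + size Z) ?zsz // /a0; lia.
have e3 : zat Z a0.+2 = zat Z i.+1.
  by rewrite (_ : a0.+2 = i.+1 + size Z) ?zsz // /a0; lia.
rewrite e2 e3 in v2; rewrite e2 in v1.
case/and4P: (v1) => h1 h2 h3 h4; case/and4P: (v2) => h5 h6 h7 h8.
split; apply/cards1P; rewrite /pass /=.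
  by rewrite (INT1 h1 h2 h3 h4).
by rewrite (INT1 h5 h6 h7 h8).
Qed.

Lemma count_split (a : pred ({set T} * {set T})) (b : T -> pred ({set T} * {set T})) (l : seq ({set T} * {set T})) :
  (forall p, p \in l -> a p = \sum_u b u p :> nat) -> count a l = \sum_u count (b u) l.
Proof.
elim: l => [_|x l IH H] /=; first by rewrite big1.
rewrite big_split /= -H ?mem_head // IH // => p hp; apply: H; by rewrite inE hp orbT.
Qed.

Lemma sum_single (a0 : T) (c : bool) : \sum_u (((a0 == u) && c) : nat) = c.
Proof.
rewrite (bigD1 a0) //= eqxx big1 ?addn0 // => u hu.
by rewrite eq_sym (negbTE hu).
Qed.

Lemma mem_Pall p : p \in Pall -> exists2 Z, Z \in tau & exists i, p = pass (Z, i).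
Proof.
by case/flatten_mapP => Z hZ /mapP [i _ ->]; exists Z => //; exists i.
Qed.

Lemma G2in v : count (fun p => p.2 == [set v]) Pall =
  \sum_u count (pred1 ([set u], [set v])) Pall.
Proof.
apply: count_split => p /mem_Pall [Z hZ [i ->]].
have [[a ha] _] := pass_sing i hZ.
case: (pass (Z, i)) ha => p1 p2 /= ->.
under eq_bigr => u _ do rewrite /= xpair_eqE (inj_eq set1_inj).
by rewrite sum_single.
Qed.

Lemma G2out v : count (fun p => p.1 == [set v]) Pall =
  \sum_u count (pred1 ([set v], [set u])) Pall.
Proof.
apply: count_split => p /mem_Pall [Z hZ [i ->]].
have [_ [b hb]] := pass_sing i hZ.
case: (pass (Z, i)) hb => p1 p2 /= ->.
under eq_bigr => u _ do rewrite /= xpair_eqE (inj_eq set1_inj) andbC.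
by rewrite sum_single.
Qed.

Lemma G3core (Z : seq {set T}) (i : nat) u w : Z \in tau ->
  pass (Z, i) = ([set u], [set w]) -> zat Z i = [set u; w].
Proof.
move=> hZ hq.
have zZ := tauZZ hZ; have hn := zpos zZ.
set a0 := (i + size Z).-1.
case: (ZZ1 zZ a0) => v1 v2 _ hd.
have e2 : zat Z a0.+1 = zat Z i by rewrite (_ : a0.+1 = i + size Z) ?zsz // /a0; lia.
have e3 : zat Z a0.+2 = zat Z i.+1.
  by rewrite (_ : a0.+2 = i.+1 + size Z) ?zsz // /a0; lia.
rewrite e2 e3 in v2; rewrite e2 in v1; rewrite e3 in hd.
case: hq => hu hw.
have iu : u \in zat Z a0 :&: zat Z i by rewrite -/a0 hu set11.
have iw : w \in zat Z i :&: zat Z i.+1 by rewrite hw set11.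
rewrite !inE in iu iw; case/andP: iu => iu1 iu2; case/andP: iw => iw1 iw2.
have nuw : u != w by apply/negP => /eqP euw; subst w; apply: (disjE hd iu1 iw2).
case/and4P: v1 => _ hE _ _.
apply/esym/eqP; rewrite eqEcard subUset !sub1set iu2 iw1 /= cards2 nuw (edge2 hE).
done.
Qed.

Lemma G3 u w : count (pred1 ([set u], [set w])) Pall =
  count (pred1 ([set u], [set w])) (edge_passages tau [set u; w]).
Proof.
rewrite /Pall /edge_passages !count_flatten -!map_comp; congr sumn.
apply/eq_in_map => Z hZ /=; rewrite !count_map count_filter.
apply: eq_in_count => i _ /=.
case: eqP => //= hq; apply/esym/eqP; exact: G3core hZ hq.
Qed.


Lemma EP_nil (E : {set T}) : ~~ is_edge F E -> edge_passages tau E = [::].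
Proof.
move=> hE; rewrite EP.
have H : forall p, p \in occ E -> False.
  move=> [Z i] ho; have [hZ _ he] := mem_occ ho.
  case: (tauZZ hZ) => [[_ hed] _ _ _ _]; have := hed i; rewrite he.
  by move=> h; rewrite h in hE.
by case: (occ E) H => // p l /(_ p (mem_head _ _)).
Qed.

Lemma perm2 (X : eqType) (P : seq X) q : size P = 2 ->
  perm_eq P [:: q; q] = (count (pred1 q) P == 2).
Proof.
move=> hs; apply/idP/idP.
  by move/permP => /(_ (pred1 q)) -> /=; rewrite eqxx.
move=> hc; have : all (pred1 q) P by rewrite all_count hs.
by move/all_pred1P => ->; rewrite hs perm_refl.
Qed.

Lemma PAIR u w :
  count (pred1 ([set u], [set w])) (edge_passages tau [set u; w]) +
  count (pred1 ([set w], [set u])) (edge_passages tau [set w; u]) =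
  (if is_edge F [set u; w] then 2 else 0).
Proof.
rewrite [[set w; u]]setUC.
case: (boolP (is_edge F [set u; w])) => hE; last by rewrite EP_nil.
have nuw : u != w.
  apply/negP => /eqP euw; subst w; have := edge2 hE; by rewrite setUid cards1.
set P := edge_passages tau [set u; w].
have hs : size P = 2 by apply: EP_size.
have hq : ([set u], [set w]) != ([set w], [set u]).
  by rewrite xpair_eqE (inj_eq set1_inj) (negbTE nuw).
have := count_predUI (pred1 ([set u], [set w])) (pred1 ([set w], [set u])) P.
rewrite (@eq_in_count _ _ predT); last first.
  move=> p /(EP_form hE) [a [b [nab ha hb ->]]] /=.
  move: ha hb; rewrite !inE.
  case/orP => /eqP ea; case/orP => /eqP eb; subst a b; rewrite ?eqxx ?orbT //;
    by rewrite eqxx in nab.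
rewrite count_predT hs (@eq_count _ _ pred0) ?count_pred0 ?addn0 //.
move=> p /=; apply/negP => /andP [/eqP -> /eqP h]; by rewrite h eqxx in hq.
Qed.

Lemma main v : #|[set u | typeII_dir tau u v]| = #|[set w | typeII_dir tau v w]|.
Proof.
pose N u w := count (pred1 ([set u], [set w])) (edge_passages tau [set u; w]).
have G : \sum_u N u v = \sum_u N v u.
  transitivity (\sum_u count (pred1 ([set u], [set v])) Pall).
    by apply: eq_bigr => u _; rewrite G3.
  rewrite -G2in G1 G2out; apply: eq_bigr => u _; by rewrite G3.
have T2 u w : typeII_dir tau u w = (N u w == 2).
  rewrite /typeII_dir /N; case: (boolP (is_edge F [set u; w])) => hE.
    by rewrite perm2 // EP_size.
  by rewrite EP_nil //=; apply/negbTE/negP => /perm_size.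
have card_sum (P : pred T) : #|[set u | P u]| = \sum_u P u.
  rewrite cardsE -sum1_card big_mkcond /=; apply: eq_bigr => u _.
  by rewrite unfold_in; case: (P u).
have key u : (N u v == 2) * 2 + (N u v == 1) = N u v /\
             (N v u == 2) * 2 + (N v u == 1) = N v u /\
             (N u v == 1) = (N v u == 1).
  have := PAIR u v; rewrite -/(N u v) -/(N v u).
  move: (N u v) (N v u) => a b h.
  have ha : a <= 2 by case: ifP h; lia.
  have hb : b <= 2 by case: ifP h; lia.
  case: ifP h => _ h.
    by case: a h ha => [|[|[|a]]]; case: b hb => [|[|[|b]]].
  by case: a h ha => [|[|[|a]]]; case: b hb => [|[|[|b]]].
rewrite !card_sum.
have e1 : \sum_u N u v = \sum_u (typeII_dir tau u v : nat) + \sum_u (typeII_dir tau u v : nat)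
                       + \sum_u ((N u v == 1) : nat).
  rewrite -!big_split; apply: eq_bigr => u _ /=; rewrite T2.
  by case: (key u) => k _; rewrite -{1}k muln2 -addnn.
have e2 : \sum_u N v u = \sum_u (typeII_dir tau v u : nat) + \sum_u (typeII_dir tau v u : nat)
                       + \sum_u ((N u v == 1) : nat).
  rewrite -!big_split; apply: eq_bigr => u _ /=; rewrite T2.
  by case: (key u) => _ [k2 k3]; rewrite -{1}k2 k3 muln2 -addnn.
move: G; rewrite e1 e2; lia.
Qed.

End Tau.

End Tri1.

Unset Implicit Arguments.

Theorem lemma1 (T : finType) (F : {set {set T}}) (tau : seq (seq {set T})) (v : T) :
  is_triangulation F -> z_orientation F tau -> vertex_typeII F tau v ->
  #|[set u | typeII_dir tau u v]| = #|[set w | typeII_dir tau v w]|.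
Proof. move=> HT HZ _; exact: (main HT HZ v). Qed.
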